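(* If $G$ is an optimal digraph on $n$ vertices, then $\alpha_G > n/4$.
   Context: Digraphs are finite, loopless, with at most one edge $uv$ per ordered pair. A digraph is $2$-free if no distinct $u,v$ have both $uv,vu$ as edges. A circular interval digraph is a digraph together with a fixed arrangement of its vertices in a circle such that for all distinct $u,v,w$ in clockwise order with $uw\in E(G)$, also $uv,vw\in E(G)$. For distinct $u,v$, $d(u,v) = 1 + |\{w: u,w,v \text{ distinct, in clockwise order}\}|$; this is the length of the ordered pair $uv$. A non-edge is an ordered pair $(u,v)$ of distinct vertices with neither $uv$ nor $vu$ an edge; its length is $d(u,v)$. $\alpha_G$ is the minimum length of a non-edge ($\infty$ if none) and $\beta_G$ the maximum length of an edge ($0$ if none). $\xi(G)$ is the number of pairs $(uv,(w,x))$ with $uv\in E(G)$, $(w,x)$ a non-edge, $d(u,v)>d(w,x)$. $\tilde P_3(G)$ is the number of triples $(a,b,c)$ of distinct vertices with $ab,bc\in E(G)$ and $ac,ca\notin E(G)$. For fixed $n\ge 4$, $G$ is optimal if it is a $2$-free circular interval digraph on $n$ vertices maximizing $\tilde P_3$ among all such digraphs and, subject to this, minimizing $\xi(G)$. *)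

(* Defs.v *)
From mathcomp Require Import all_boot.
Set Implicit Arguments. Unset Strict Implicit. Unset Printing Implicit Defensive.

(* Vertices are 'I_n, arranged on the circle in increasing (cyclic) order:
   clockwise successor of i is i+1 mod n. *)

(* d(u,v) = 1 + #{w strictly between u and v clockwise} = (v - u) mod n. *)
Definition cdist (n : nat) (u v : 'I_n) : nat := (v + n - u) %% n.

Definition clockwise (n : nat) (u v w : 'I_n) : bool :=
  [&& u != v, v != w, u != w & cdist u v < cdist u w].

(* finite loopless digraph with at most one edge per ordered pair: a relation *)
Definition loopless (n : nat) (E : rel 'I_n) : Prop := forall u, ~~ E u u.

Definition two_free (n : nat) (E : rel 'I_n) : Prop :=
  forall u v, u != v -> ~~ (E u v && E v u).

Definition circ_interval (n : nat) (E : rel 'I_n) : Prop :=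
  forall u v w, clockwise u v w -> E u w -> E u v && E v w.

Definition valid (n : nat) (E : rel 'I_n) : Prop :=
  [/\ loopless E, two_free E & circ_interval E].

Definition nonedge (n : nat) (E : rel 'I_n) (u v : 'I_n) : bool :=
  [&& u != v, ~~ E u v & ~~ E v u].

(* alpha_G : minimum length of a non-edge; None encodes infinity *)
Definition alpha (n : nat) (E : rel 'I_n) : option nat :=
  if [exists p : 'I_n * 'I_n, nonedge E p.1 p.2]
  then Some (\big[minn/n]_(p : 'I_n * 'I_n | nonedge E p.1 p.2) cdist p.1 p.2)
  else None.

Definition xi (n : nat) (E : rel 'I_n) : nat :=
  #|[set p : ('I_n * 'I_n) * ('I_n * 'I_n) |
      [&& E p.1.1 p.1.2, nonedge E p.2.1 p.2.2 &
          cdist p.2.1 p.2.2 < cdist p.1.1 p.1.2]]|.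

Definition P3 (n : nat) (E : rel 'I_n) : nat :=
  #|[set t : 'I_n * 'I_n * 'I_n |
      [&& t.1.1 != t.1.2, t.1.2 != t.2, t.1.1 != t.2,
          E t.1.1 t.1.2, E t.1.2 t.2, ~~ E t.1.1 t.2 & ~~ E t.2 t.1.1]]|.

Definition optimal (n : nat) (E : rel 'I_n) : Prop :=
  [/\ valid E,
      (forall E' : rel 'I_n, valid E' -> P3 E' <= P3 E) &
      (forall E' : rel 'I_n, valid E' -> P3 E' = P3 E -> xi E <= xi E')].

(* Main.v *)
Require Import Defs.
From mathcomp Require Import all_boot zify.
Set Implicit Arguments. Unset Strict Implicit. Unset Printing Implicit Defensive.
Lemma cdistE n (u v : 'I_n) : cdist u v = if u <= v then v - u else v + n - u.
Proof.
rewrite /cdist; case: leqP => h.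
- have -> : v + n - u = (v - u) + n by lia.
  rewrite modnDr modn_small //; have := ltn_ord v; lia.
- rewrite modn_small //; have := ltn_ord u; lia.
Qed.
Lemma cdist_lt n (z v : 'I_n) : cdist z v < n.
Proof. rewrite cdistE; have := ltn_ord v; have := ltn_ord z; case: (leqP z v); lia. Qed.

Lemma sum_interval n m p :
  \sum_(k < n) ((m <= k) && (k < p)) = minn p n - minn m n.
Proof.
elim: n => [|n IH]; first by rewrite big_ord0; lia.
rewrite big_ord_recr /= IH.
case: (leqP m n) => h1; case: (ltnP n p) => h2 /=; lia.
Qed.

Lemma card_setk n (P : pred nat) : #|[set k : 'I_n | P k]| = \sum_(k < n) P k.
Proof.
rewrite -sum1dep_card big_mkcond /=; apply: eq_bigr => k _; by case: (P k).
Qed.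

Lemma card_cdistl n (z : 'I_n) (P : pred nat) :
  #|[set v : 'I_n | P (cdist z v)]| = \sum_(k < n) P k.
Proof.
pose h v := Ordinal (cdist_lt z v).
have hi : injective h.
  move=> v1 v2 /(congr1 val) /=; rewrite !cdistE => e; apply/val_inj; move: e.
  have := ltn_ord v1; have := ltn_ord v2; have := ltn_ord z.
  case: (leqP z v1); case: (leqP z v2) => /=; lia.
rewrite -card_setk -(@card_preimset _ h [set k : 'I_n | P k] hi); apply: eq_card => v; by rewrite !inE.
Qed.

Lemma card_cdistr n (z : 'I_n) (P : pred nat) :
  #|[set v : 'I_n | P (cdist v z)]| = \sum_(k < n) P k.
Proof.
pose h v := Ordinal (cdist_lt v z).
have hi : injective h.
  move=> v1 v2 /(congr1 val) /=; rewrite !cdistE => e; apply/val_inj; move: e.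
  have := ltn_ord v1; have := ltn_ord v2; have := ltn_ord z.
  case: (leqP v1 z); case: (leqP v2 z) => /=; lia.
rewrite -card_setk -(@card_preimset _ h [set k : 'I_n | P k] hi); apply: eq_card => v; by rewrite !inE.
Qed.

Lemma bigmin_spec (I : eqType) (s : seq I) (P : pred I) (F : I -> nat) (d : nat) :
  (forall i, i \in s -> P i -> \big[minn/d]_(i <- s | P i) F i <= F i) /\
  (\big[minn/d]_(i <- s | P i) F i = d \/
    exists2 i, (i \in s) && P i & \big[minn/d]_(i <- s | P i) F i = F i).
Proof.
elim: s => [|x s [IH1 IH2]]; first by rewrite big_nil; split=> //; left.
rewrite big_cons; split.
- move=> i; rewrite inE => /orP [/eqP -> -> | hi hPi]; first by rewrite geq_minl.
  case: ifP => _; last exact: IH1.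
  exact: leq_trans (geq_minr _ _) (IH1 _ hi hPi).
- case: ifP => hPx.
  + case: (leqP (F x) (\big[minn/d]_(i <- s | P i) F i)) => h.
    * right; exists x; first by rewrite inE eqxx hPx.
      by [].  
    * case: IH2 => [->|[i hi ->]]; [left|right] => //.
      exists i => //; move: hi => /andP [hi hp]; by rewrite inE hi orbT hp.
  + case: IH2 => [->|[i hi ->]]; [left|right] => //.
    exists i => //; move: hi => /andP [hi hp]; by rewrite inE hi orbT hp.
Qed.

Lemma cwE n (x y z : 'I_n) : clockwise x y z =
  [|| (x < y) && (y < z), (y < z) && (z < x) | (z < x) && (x < y)].
Proof.
rewrite /clockwise !cdistE -!(inj_eq val_inj) /=.
have := ltn_ord x; have := ltn_ord y; have := ltn_ord z.
case: (leqP x y); case: (leqP x z) => *; apply/idP/idP; lia.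
Qed.

Ltac geo := rewrite ?cwE ?cdistE -?(inj_eq val_inj) /=; repeat (case: ifP => ?); lia.

Lemma alpha_spec n (E : rel 'I_n) a : alpha E = Some a ->
  (exists u w, nonedge E u w /\ cdist u w = a) /\
  (forall u w, nonedge E u w -> a <= cdist u w).
Proof.
rewrite /alpha; case: ifP => // /existsP [p0 hp0] [<-].
have [H1 H2] := bigmin_spec (index_enum ('I_n * 'I_n)%type)
   (fun p => nonedge E p.1 p.2) (fun p => cdist p.1 p.2) n.
split.
- case: H2 => [hd | [p hp he]].
  + exfalso; have := H1 p0 (mem_index_enum _) hp0.
    rewrite hd; have := cdist_lt p0.1 p0.2; lia.
  + exists p.1, p.2; split; first by case/andP: hp.
    by rewrite he.
- move=> u w h; exact: (H1 (u, w) (mem_index_enum _) h).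
Qed.

Definition Sset n (E : rel 'I_n) := [set t : 'I_n * 'I_n * 'I_n |
      [&& t.1.1 != t.1.2, t.1.2 != t.2, t.1.1 != t.2,
          E t.1.1 t.1.2, E t.1.2 t.2, ~~ E t.1.1 t.2 & ~~ E t.2 t.1.1]].
Lemma P3E n (E : rel 'I_n) : P3 E = #|Sset E|. Proof. by []. Qed.
Definition Xset n (E : rel 'I_n) := [set p : ('I_n * 'I_n) * ('I_n * 'I_n) |
      [&& E p.1.1 p.1.2, nonedge E p.2.1 p.2.2 &
          cdist p.2.1 p.2.2 < cdist p.1.1 p.1.2]].
Lemma xiE n (E : rel 'I_n) : xi E = #|Xset E|. Proof. by []. Qed.
Definition OutN n (E : rel 'I_n) x := [set y | E x y].
Definition InN n (E : rel 'I_n) x := [set y | E y x].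
Definition Btw n (x z : 'I_n) := [set y | clockwise x y z].
Definition remE n (E : rel 'I_n) p q : rel 'I_n :=
  fun x y => E x y && ~~ ((x == p) && (y == q)).
Definition addE n (E : rel 'I_n) u w : rel 'I_n :=
  fun x y => E x y || ((x == u) && (y == w)).

Lemma inS_intro n (E : rel 'I_n) x y z : x != y -> y != z -> x != z ->
  E x y -> E y z -> ~~ E x z -> ~~ E z x -> ((x, y), z) \in Sset E.
Proof. by move=> *; rewrite inE /=; repeat (apply/andP; split). Qed.

Lemma inS_elim n (E : rel 'I_n) x y z : ((x, y), z) \in Sset E ->
  [/\ x != y, y != z, x != z, E x y & E y z] /\ (~~ E x z /\ ~~ E z x).
Proof. by rewrite inE /= => /and3P [h1 h2 /and5P [h3 h4 h5 h6 h7]]. Qed.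

Lemma vl n (E : rel 'I_n) : valid E -> forall x, ~~ E x x.
Proof. by case. Qed.
Lemma v2 n (E : rel 'I_n) : valid E -> forall x y, E x y -> ~~ E y x.
Proof.
case=> hl h2 _ x y hxy; case: (eqVneq x y) => [e|ne].
- by subst; rewrite (negbTE (hl y)) in hxy.
- by apply/negP => hyx; move: (h2 x y ne); rewrite hxy hyx.
Qed.
Lemma vi n (E : rel 'I_n) : valid E -> forall x y z,
  clockwise x y z -> E x z -> E x y && E y z.
Proof. by case=> _ _ hi; exact: hi. Qed.

Lemma neq_E n (E : rel 'I_n) : valid E -> forall x y, E x y -> x != y.
Proof. move=> hv x y h; apply/negP => /eqP e; subst; by rewrite (negbTE (vl hv y)) in h. Qed.

Lemma card_U2 (T : finType) (A B : {set T}) :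
  (forall x, x \in A -> x \notin B) -> #|A :|: B| = #|A| + #|B|.
Proof.
move=> h; have := cardsUI A B; suff -> : A :&: B = set0 by rewrite cards0 addn0.
apply/setP => x; rewrite !inE; case hA: (x \in A) => //=; by rewrite (negbTE (h x hA)).
Qed.

Lemma card_diff_id (T : finType) (A B : {set T}) :
  #|A| + #|B :\: A| = #|B| + #|A :\: B|.
Proof. have := cardsID A B; have := cardsID B A; rewrite setIC; lia. Qed.

Lemma card_Btw n (x z : 'I_n) : x != z -> #|Btw x z| = cdist x z - 1.
Proof.
move=> hxz.
have -> : Btw x z = [set v | (1 <= cdist x v) && (cdist x v < cdist x z)].
  apply/setP => v; rewrite !inE /clockwise; apply/idP/idP;
  move: hxz (ltn_ord x) (ltn_ord z) (ltn_ord v); geo.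
have h := card_cdistl x (fun k => (1 <= k) && (k < cdist x z)); simpl in h.
rewrite h sum_interval; have := cdist_lt x z; have := ltn_ord x; lia.
Qed.

Lemma cdist_sym n (x y : 'I_n) : x != y -> cdist x y + cdist y x = n.
Proof. move: (ltn_ord x) (ltn_ord y); geo. Qed.

Lemma cdist_pos n (x y : 'I_n) : x != y -> 0 < cdist x y.
Proof. move: (ltn_ord x) (ltn_ord y); geo. Qed.

Lemma cw_rot n (x y z : 'I_n) : clockwise x y z -> clockwise y z x.
Proof. geo. Qed.

Lemma cw_tri n (x y z : 'I_n) : x != y -> y != z -> x != z ->
  clockwise x y z || clockwise x z y.
Proof. geo. Qed.

Lemma cw_lt n (x y z : 'I_n) : clockwise x y z -> cdist x y < cdist x z.
Proof. by case/and4P. Qed.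

Lemma remove_step n (E : rel 'I_n) p q :
  valid E -> E p q -> (forall x y, E x y -> cdist x y <= cdist p q) ->
  [/\ valid (remE E p q), P3 E + 2 * cdist p q <= P3 (remE E p q) + n &
      (forall u w, nonedge E u w -> cdist u w < cdist p q -> n = 2 * cdist p q ->
          xi (remE E p q) < xi E)].
Proof.
move=> hv hpq hmax.
have hpq' : p != q := neq_E hv hpq.
have hqp : ~~ E q p := v2 hv hpq.
have hval : valid (remE E p q).
  split.
  - by move=> x; rewrite /remE (negbTE (vl hv x)).
  - move=> x y hxy; rewrite /remE; apply/negP => /andP [/andP [h1 _] /andP [h2 _]].
    by move: (v2 hv h1); rewrite h2.
  - move=> x v y hc /andP [hxy hne]; have /andP [h1 h2] := vi hv hc hxy.
    rewrite /remE h1 h2 /=; apply/andP; split.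
    + apply/negP => /andP [/eqP ex /eqP ev]; subst x v.
      have := hmax _ _ hxy; have := cw_lt hc; lia.
    + apply/negP => /andP [/eqP ev /eqP ey]; subst v y.
      have := hmax _ _ hxy; move: hc (ltn_ord x) (ltn_ord p) (ltn_ord q); geo.
split => //.
-
  rewrite !P3E.
  have hid := card_diff_id (Sset (remE E p q)) (Sset E).
  have hG : [set (p, v, q) | v in Btw p q] \subset Sset (remE E p q) :\: Sset E.
    apply/subsetP => t /imsetP [v]; rewrite inE => hc ->.
    have /andP [h1 h2] := vi hv hc hpq.
    move: (hc) => /and4P [hpv hvq _ _].
    rewrite inE; apply/andP; split.
    + apply/negP => /inS_elim [_ [/negP]]; by [].
    + apply: inS_intro => //; rewrite /remE ?h1 ?h2 ?eqxx /=.
      * by rewrite (negbTE hvq).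
      * by rewrite eq_sym (negbTE hpv).
      * by rewrite andbF.
      * by rewrite (negbTE hqp).
  have hGc : #|[set (p, v, q) | v in Btw p q]| = cdist p q - 1.
    rewrite card_imset ?card_Btw //.
    by move=> v1 v2 [].
  have hL : Sset E :\: Sset (remE E p q) \subset
      [set (p, q, c) | c in OutN E q :\: InN E p] :|:
      [set (x, p, q) | x in InN E p :\: OutN E q].
    apply/subsetP => [[[x y] z]]; rewrite inE => /andP [hn hin].
    have [[hxy hyz hxz exy eyz] [nxz nzx]] := inS_elim hin.
    case: (boolP ((x == p) && (y == q))) => [/andP [/eqP ex /eqP ey] | h1].
      subst x y; rewrite inE; apply/orP; left; apply/imsetP; exists z => //.
      by rewrite !inE nzx eyz.
    case: (boolP ((y == p) && (z == q))) => [/andP [/eqP ey /eqP ez] | h2].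
      subst y z; rewrite inE; apply/orP; right; apply/imsetP; exists x => //.
      by rewrite !inE exy andbT; move: nzx.
    exfalso; move/negP: hn; apply; apply: inS_intro => //; rewrite /remE.
    + by rewrite exy h1.
    + by rewrite eyz h2.
    + by rewrite negb_and nxz.
    + by rewrite negb_and nzx.
  have hqp' : q != p by rewrite eq_sym.
  have hsub1 : OutN E q \subset Btw q p.
    apply/subsetP => v; rewrite !inE => hqv.
    have hqv' := neq_E hv hqv.
    have hvp : v != p by apply/negP => /eqP e; subst v; rewrite hqv in hqp.
    case/orP: (cw_tri hqv' hvp hqp') => // hc.
    by have /andP [h _] := vi hv hc hqv; rewrite h in hqp.
  have hsub2 : InN E p \subset Btw q p.
    apply/subsetP => v; rewrite !inE => hvp.
    have hvp' := neq_E hv hvp.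
    have hqv : q != v by apply/negP => /eqP e; subst v; rewrite hvp in hqp.
    case/orP: (cw_tri hqv hvp' hqp') => // hc.
    have hc' := cw_rot (cw_rot hc).
    by have /andP [_ h] := vi hv hc' hvp; rewrite h in hqp.
  have hLc : #|Sset E :\: Sset (remE E p q)| <= cdist q p - 1.
    apply: (leq_trans (subset_leq_card hL)).
    rewrite cardsU; apply: leq_trans (leq_subr _ _) _.
    apply: (leq_trans (leq_add (leq_imset_card _ _) (leq_imset_card _ _))).
    rewrite -card_U2; last first.
      move=> x; rewrite !inE; by case: (E q x); case: (E x p).
    rewrite -card_Btw //.
    apply: subset_leq_card; apply/subsetP => x; rewrite in_setU !in_setD => /orP [/andP [_ h] | /andP [_ h]].
    + exact: (subsetP hsub1).
    + exact: (subsetP hsub2).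
  have hGc' := subset_leq_card hG; rewrite hGc in hGc'.
  have := cdist_sym hpq'; have := cdist_pos hpq'; have := cdist_pos hqp'; lia.
- move=> u w hne hlt hn2; rewrite !xiE; apply: proper_card; apply/properP; split.
  + apply/subsetP => [[[e1 e2] [t1 t2]]]; rewrite !inE /= /remE /nonedge.
    move=> /and3P [/andP [he _] /and3P [ht hn1 hn2'] hlt'].
    rewrite he ht hlt' /= andbT; apply/andP; split.
    * apply/negP => h; move: hn1; rewrite h /= negbK => /andP [/eqP ? /eqP ?]; subst.
      have := hmax _ _ he; lia.
    * apply/negP => h; move: hn2'; rewrite h /= negbK => /andP [/eqP ? /eqP ?]; subst.
      have := hmax _ _ he; have := cdist_sym hpq'; lia.
  + exists ((p, q), (u, w)); first by rewrite inE /= hpq hne hlt.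
    by rewrite inE /= /remE !eqxx andbF.
Qed.

Lemma short_edges n (E : rel 'I_n) : optimal E -> forall u w, nonedge E u w ->
  4 * cdist u w <= n -> forall x y, E x y -> 2 * cdist x y < n.
Proof.
move=> [hv hP hX] u w hne h4 x y hxy; rewrite ltnNge; apply/negP => hge.
case: (@arg_maxnP _ (x, y) (fun e : 'I_n * 'I_n => E e.1 e.2)
   (fun e : 'I_n * 'I_n => cdist e.1 e.2) hxy) => [[p q]] /= hpq hmax.
have hmax' : forall a b, E a b -> cdist a b <= cdist p q.
  by move=> a b h; exact: (hmax (a, b) h).
have [hv' hcnt hxi] := remove_step hv hpq hmax'.
have hle := hP _ hv'.
have hxyle := hmax' _ _ hxy.
have huw : 0 < cdist u w by apply: cdist_pos; case/and3P: hne.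
have hlt : cdist u w < cdist p q by lia.
have heq : n = 2 * cdist p q by lia.
have hP3eq : P3 (remE E p q) = P3 E by lia.
have := hX _ hv' hP3eq; have := hxi u w hne hlt heq; lia.
Qed.

Lemma add_step n (E : rel 'I_n) u w : 4 <= n -> valid E -> nonedge E u w ->
  (forall x y, nonedge E x y -> cdist u w <= cdist x y) -> 4 * cdist u w <= n ->
  (forall x y, E x y -> 2 * cdist x y < n) ->
  [/\ valid (addE E u w), P3 E <= P3 (addE E u w) &
      (1 < cdist u w -> P3 E < P3 (addE E u w))].
Proof.
move=> hn hv hne hmin h4 hsh.
move: (hne) => /and3P [huw nuw nwu].
have hwu : w != u by rewrite eq_sym.
have hsym := cdist_sym huw.
have hapos := cdist_pos huw.
have fa : forall v, E u v -> cdist u v < cdist u w.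
  move=> v huv; rewrite ltnNge; apply/negP => hge.
  have huv' := neq_E hv huv.
  have hvw : v != w by apply/negP => /eqP e; subst v; rewrite huv in nuw.
  have hc : clockwise u w v.
    by move: hge huv' hvw huw (ltn_ord u) (ltn_ord v) (ltn_ord w); geo.
  by have /andP [h _] := vi hv hc huv; rewrite h in nuw.
have fbtw : forall v, clockwise u v w -> E u v && E v w.
  move=> v hc; move: (hc) => /and4P [huv hvw _ hlt].
  have huvE : E u v.
    case: (boolP (E u v)) => // hn1.
    case: (boolP (E v u)) => hn2.
    - by have /andP [_ h] := vi hv (cw_rot hc) hn2; rewrite h in nwu.
    - have : nonedge E u v by rewrite /nonedge huv hn1 hn2.
      move/hmin; lia.
  rewrite huvE /=.
  case: (boolP (E v w)) => // hn1.
  case: (boolP (E w v)) => hn2.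
  - by have /andP [h _] := vi hv (cw_rot (cw_rot hc)) hn2; rewrite h in nwu.
  - have : nonedge E v w by rewrite /nonedge hvw hn1 hn2.
    move/hmin => h; exfalso.
    by move: h hc (ltn_ord u) (ltn_ord v) (ltn_ord w); geo.
have fOutw : forall v, 1 <= cdist w v < cdist u w -> E w v.
  move=> v /andP [h1 h2].
  have hwv : w != v by apply/negP => /eqP e; subst v; move: h1 (ltn_ord w); geo.
  case: (boolP (E w v)) => // hn1.
  case: (boolP (E v w)) => hn2.
  - have hc : clockwise v u w.
      by move: h1 h2 h4 (ltn_ord u) (ltn_ord v) (ltn_ord w) huw; geo.
    by have /andP [_ h] := vi hv hc hn2; rewrite h in nuw.
  - have : nonedge E w v by rewrite /nonedge hwv hn1 hn2.
    move/hmin; lia.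
have fInu : forall v, 1 <= cdist v u < cdist u w -> E v u.
  move=> v /andP [h1 h2].
  have hvu : v != u by apply/negP => /eqP e; subst v; move: h1 (ltn_ord u); geo.
  case: (boolP (E v u)) => // hn1.
  case: (boolP (E u v)) => hn2.
  - have hc : clockwise u w v.
      by move: h1 h2 h4 (ltn_ord u) (ltn_ord v) (ltn_ord w) huw; geo.
    by have /andP [h _] := vi hv hc hn2; rewrite h in nuw.
  - have : nonedge E v u by rewrite /nonedge hvu hn1 hn2.
    move/hmin; lia.
have fA : forall x, E x u -> ~~ E x w.
  move=> x hxu; apply/negP => hxw.
  have hxu' := neq_E hv hxu; have hxw' := neq_E hv hxw.
  case/orP: (cw_tri hxu' huw hxw') => hc.
  - by have /andP [_ h] := vi hv hc hxw; rewrite h in nuw.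
  - by have /andP [_ h] := vi hv hc hxu; rewrite h in nwu.
have fB : forall c, E w c -> ~~ E u c.
  move=> c hwc; apply/negP => huc.
  have hlt := fa _ huc.
  have huc' := neq_E hv huc; have hwc' := neq_E hv hwc.
  have hc : clockwise w u c.
    by move: hlt huc' hwc' huw (ltn_ord u) (ltn_ord c) (ltn_ord w); geo.
  by have /andP [h _] := vi hv hc hwc; rewrite h in nwu.
have fC : forall b, E w b -> E b u -> forall v, clockwise w v u -> E w v || E v u.
  move=> b hwb hbu v hc.
  case: (eqVneq v b) => [-> | hvb]; first by rewrite hwb.
  move: (hc) => /and4P [hwv hvu _ _].
  have hwb' := neq_E hv hwb.
  case/orP: (cw_tri hwv hvb hwb') => hc2.
  - by have /andP [-> _] := vi hv hc2 hwb.
  - have hc3 : clockwise b v u.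
      by move: hc hc2 (ltn_ord u) (ltn_ord v) (ltn_ord w) (ltn_ord b); geo.
    by have /andP [_ ->] := vi hv hc3 hbu; rewrite orbT.
have hval : valid (addE E u w).
  split.
  - move=> x; rewrite /addE (negbTE (vl hv x)) /=; apply/negP => /andP [/eqP -> /eqP e].
    by rewrite e eqxx in huw.
  - move=> x y hxy; rewrite /addE; apply/negP => /andP [h1 h2].
    case/orP: h1 => [h1 | /andP [/eqP ex /eqP ey]]; case/orP: h2 => [h2 | /andP [/eqP ey' /eqP ex']].
    + by move: (v2 hv h1); rewrite h2.
    + by subst; rewrite h1 in nwu.
    + by subst; rewrite h2 in nwu.
    + by subst; rewrite eqxx in huw.
  - move=> x v y hc; rewrite /addE => /orP [hxy | /andP [/eqP ex /eqP ey]].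
    + by have /andP [-> ->] := vi hv hc hxy.
    + by subst; have /andP [-> ->] := fbtw _ hc.
have c1 : #|OutN E u| <= cdist u w - 1.
  have hs : OutN E u \subset [set v | (1 <= cdist u v) && (cdist u v < cdist u w)].
    apply/subsetP => v; rewrite !inE => huv; rewrite (fa _ huv) andbT.
    exact: cdist_pos (neq_E hv huv).
  have h := card_cdistl u (fun k => (1 <= k) && (k < cdist u w)); simpl in h.
  have := subset_leq_card hs; rewrite h sum_interval; have := cdist_lt u w; lia.
have c2 : cdist u w - 1 <= #|OutN E w|.
  have hs : [set v | (1 <= cdist w v) && (cdist w v < cdist u w)] \subset OutN E w.
    by apply/subsetP => v; rewrite !inE; exact: fOutw.
  have h := card_cdistl w (fun k => (1 <= k) && (k < cdist u w)); simpl in h.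
  have := subset_leq_card hs; rewrite h sum_interval; have := cdist_lt u w; lia.
have c3 : cdist u w - 1 <= #|InN E u|.
  have hs : [set v | (1 <= cdist v u) && (cdist v u < cdist u w)] \subset InN E u.
    by apply/subsetP => v; rewrite !inE; exact: fInu.
  have h := card_cdistr u (fun k => (1 <= k) && (k < cdist u w)); simpl in h.
  have := subset_leq_card hs; rewrite h sum_interval; have := cdist_lt u w; lia.
have c4 : 2 * #|OutN E w| <= n - 1.
  have hs : OutN E w \subset [set v | (1 <= cdist w v) && (cdist w v < n.+1 %/ 2)].
    apply/subsetP => v; rewrite !inE => hwv.
    have := hsh _ _ hwv; have := cdist_pos (neq_E hv hwv); lia.
  have h := card_cdistl w (fun k => (1 <= k) && (k < n.+1 %/ 2)); simpl in h.
  have := subset_leq_card hs; rewrite h sum_interval; lia.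
have c5 : 2 * #|InN E u| <= n - 1.
  have hs : InN E u \subset [set v | (1 <= cdist v u) && (cdist v u < n.+1 %/ 2)].
    apply/subsetP => v; rewrite !inE => hvu.
    have := hsh _ _ hvu; have := cdist_pos (neq_E hv hvu); lia.
  have h := card_cdistr u (fun k => (1 <= k) && (k < n.+1 %/ 2)); simpl in h.
  have := subset_leq_card hs; rewrite h sum_interval; lia.
have c6 : 0 < #|OutN E w :&: InN E u| -> cdist w u - 1 <= #|OutN E w :|: InN E u|.
  move=> /card_gt0P [b]; rewrite !inE => /andP [hwb hbu].
  rewrite -card_Btw //; apply: subset_leq_card; apply/subsetP => v; rewrite inE => hc.
  rewrite !inE; exact: fC hwb hbu v hc.
have c7 := cardsUI (OutN E w) (InN E u).
have hG : [set (u, w, c) | c in OutN E w :\: InN E u] :|: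
          [set (x, u, w) | x in InN E u :\: OutN E w] \subset
          Sset (addE E u w) :\: Sset E.
  apply/subsetP => t; rewrite in_setU => /orP [/imsetP [c hc ->] | /imsetP [x hx ->]].
  - rewrite !inE in hc; case/andP: hc => hcu hwc.
    rewrite in_setD; apply/andP; split.
    + by apply/negP => /inS_elim [[_ _ _ h _] _]; rewrite h in nuw.
    + have hwc' := neq_E hv hwc.
      have huc : u != c by apply/negP => /eqP e; subst c; rewrite hwc in nwu.
      have hcw : (c == w) = false by apply/negbTE; rewrite eq_sym.
      have hcu' : (c == u) = false by apply/negbTE; rewrite eq_sym.
      apply: inS_intro => //; rewrite /addE.
      * by rewrite !eqxx orbT.
      * by rewrite hwc.
      * by rewrite negb_or (fB _ hwc) hcw andbF.
      * by rewrite negb_or hcu hcu'.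
  - rewrite !inE in hx; case/andP: hx => hwx hxu.
    rewrite in_setD; apply/andP; split.
    + by apply/negP => /inS_elim [[_ _ _ _ h] _]; rewrite h in nuw.
    + have hxu' := neq_E hv hxu.
      have hxw : x != w by apply/negP => /eqP e; subst x; rewrite hxu in nwu.
      apply: inS_intro => //; rewrite /addE.
      * by rewrite hxu.
      * by rewrite !eqxx orbT.
      * by rewrite negb_or (fA _ hxu) (negbTE hxu').
      * by rewrite negb_or hwx (negbTE hwu).
have hGd : #|[set (u, w, c) | c in OutN E w :\: InN E u] :|:
          [set (x, u, w) | x in InN E u :\: OutN E w]| =
          #|OutN E w :\: InN E u| + #|InN E u :\: OutN E w|.
  rewrite card_U2.
    by rewrite !card_imset //; move=> ? ? [].
  move=> t /imsetP [c _ ->]; apply/negP => /imsetP [x _ [_ e _]].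
  by rewrite e eqxx in hwu.
have hL : Sset E :\: Sset (addE E u w) \subset
    [set (u, y, w) | y in OutN E u] :|: [set (w, y, u) | y in OutN E w :&: InN E u].
  apply/subsetP => [[[x y] z]]; rewrite in_setD => /andP [hn1 hin].
  have [[hxy hyz hxz exy eyz] [nxz nzx]] := inS_elim hin.
  case: (boolP ((x == u) && (z == w))) => [/andP [/eqP ex /eqP ez] | h1].
    subst x z; rewrite in_setU; apply/orP; left; apply/imsetP; exists y => //.
    by rewrite inE.
  case: (boolP ((z == u) && (x == w))) => [/andP [/eqP ez /eqP ex] | h2].
    subst x z; rewrite in_setU; apply/orP; right; apply/imsetP; exists y => //.
    by rewrite !inE eyz exy.
  exfalso; move/negP: hn1; apply; apply: inS_intro => //; rewrite /addE.
  + by rewrite exy.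
  + by rewrite eyz.
  + by rewrite negb_or nxz h1.
  + by rewrite negb_or nzx h2.
have hLc : #|Sset E :\: Sset (addE E u w)| <= #|OutN E u| + #|OutN E w :&: InN E u|.
  apply: leq_trans (subset_leq_card hL) _; rewrite cardsU.
  apply: leq_trans (leq_subr _ _) _; apply: leq_add; exact: leq_imset_card.
have hid := card_diff_id (Sset (addE E u w)) (Sset E).
have hGc := subset_leq_card hG; rewrite hGd (cardsD (OutN E w)) (cardsD (InN E u)) [InN E u :&: _]setIC in hGc.
have hkf : #|OutN E w :&: InN E u| <= #|OutN E w| by apply: subset_leq_card; apply: subsetIl.
have hkg : #|OutN E w :&: InN E u| <= #|InN E u| by apply: subset_leq_card; apply: subsetIr.
rewrite !P3E; split => //; last move=> ha.
- move: hid hLc hGc hkf hkg c1 c2 c3 c4 c5 c6 c7 hsym hapos h4.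
  move: #|Sset E :\: _| => L; move: #|Sset (addE E u w) :\: _| => G.
  move: #|Sset E| => S; move: #|Sset (addE E u w)| => S'.
  move: #|OutN E w :&: InN E u| => k; move: #|OutN E w :|: InN E u| => U.
  move: #|OutN E w| => f; move: #|InN E u| => g; move: #|OutN E u| => ou.
  lia.
- move: hid hLc hGc hkf hkg c1 c2 c3 c4 c5 c6 c7 hsym hapos h4 ha.
  move: #|Sset E :\: _| => L; move: #|Sset (addE E u w) :\: _| => G.
  move: #|Sset E| => S; move: #|Sset (addE E u w)| => S'.
  move: #|OutN E w :&: InN E u| => k; move: #|OutN E w :|: InN E u| => U.
  move: #|OutN E w| => f; move: #|InN E u| => g; move: #|OutN E u| => ou.
  lia.
Qed.

Lemma add_xi n (E : rel 'I_n) u w : nonedge E u w -> cdist u w = 1 ->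
  forall p q, E p q -> 1 < cdist p q -> xi (addE E u w) < xi E.
Proof.
move=> hne h1 p q hpq hlt; rewrite !xiE; apply: proper_card; apply/properP; split.
- apply/subsetP => [[[e1 e2] [t1 t2]]]; rewrite !inE /= /addE /nonedge.
  move=> /and3P [he /and3P [ht hn1 hn2] hlt'].
  rewrite negb_or in hn1; rewrite negb_or in hn2.
  case/andP: hn1 => hn1 _; case/andP: hn2 => hn2 _.
  rewrite ht hn1 hn2 hlt' /= andbT.
  case/orP: he => // /andP [/eqP ? /eqP ?]; subst.
  rewrite h1 in hlt'; have := cdist_pos ht; lia.
- exists ((p, q), (u, w)); first by rewrite inE /= hpq hne h1 hlt.
  by rewrite inE /= /nonedge /addE !eqxx orbT /= !andbF.
Qed.

Definition cycE n : rel 'I_n := fun x y => cdist x y == 1.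

Lemma cycle_better n (E : rel 'I_n) u w : 4 <= n -> nonedge E u w -> cdist u w = 1 ->
  (forall x y, E x y -> cdist x y = 1) -> valid (@cycE n) /\ P3 E < P3 (@cycE n).
Proof.
move=> hn hne h1 hall.
split.
- split.
  + move=> x; rewrite /cycE; move: (ltn_ord x); geo.
  + move=> x y hxy; rewrite /cycE; move: hxy hn (ltn_ord x) (ltn_ord y); geo.
  + move=> x v y hc; rewrite /cycE => h; exfalso.
    move: hc h (ltn_ord x) (ltn_ord v) (ltn_ord y); geo.
- rewrite !P3E; apply: proper_card; apply/properP; split.
  + apply/subsetP => [[[x y] z]] /inS_elim [[hxy hyz hxz exy eyz] [nxz nzx]].
    have c1 := hall _ _ exy; have c2 := hall _ _ eyz.
    apply: inS_intro => //; rewrite /cycE ?c1 ?c2 //.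
    * move: c1 c2 hyz hn (ltn_ord x) (ltn_ord y) (ltn_ord z); geo.
    * move: c1 c2 hxz hxy hyz hn (ltn_ord x) (ltn_ord y) (ltn_ord z); geo.
  + have [v hv] : exists v : 'I_n, cdist w v = 1.
      case: (ltnP w.+1 n) => h.
      - by exists (Ordinal h); rewrite cdistE /=; case: ifP; lia.
      - have h0 : 0 < n by lia.
        by exists (Ordinal h0); rewrite cdistE /=; move: (ltn_ord w); case: ifP; lia.
    exists ((u, w), v).
    * apply: inS_intro; rewrite /cycE;
        move: h1 hv hn (ltn_ord u) (ltn_ord w) (ltn_ord v); geo.
    * by apply/negP => /inS_elim [[_ _ _ h _] _]; move: hne; rewrite /nonedge h /= andbF.
Qed.

Theorem mainTheorem6 (n : nat) (hn : 4 <= n) (E : rel 'I_n) :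
  optimal E ->
  forall a : nat, alpha E = Some a -> n < 4 * a.
Proof.
move=> hopt a ha; move: (hopt) => [hv hP hX].
have [[u [w [hne hua]]] hmin] := alpha_spec ha.
rewrite ltnNge; apply/negP => h4; rewrite -hua in h4.
have hsh := short_edges hopt hne h4.
have hmin' : forall x y, nonedge E x y -> cdist u w <= cdist x y.
  by move=> x y h; rewrite hua; exact: hmin.
have [hv' hle hlt] := add_step hn hv hne hmin' h4 hsh.
have hPle := hP _ hv'.
have hpos : 0 < cdist u w by apply: cdist_pos; case/and3P: hne.
have a1 : cdist u w = 1.
  by case: (ltnP 1 (cdist u w)) => h; [have := hlt h; lia | lia].
have heq : P3 (addE E u w) = P3 E by lia.
have hXle := hX _ hv' heq.
have hall : forall x y, E x y -> cdist x y = 1.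
  move=> x y hxy; case: (ltnP 1 (cdist x y)) => h.
  - have := add_xi hne a1 hxy h; lia.
  - have := cdist_pos (neq_E hv hxy); lia.
have [hC hlt2] := cycle_better hn hne a1 hall.
have := hP _ hC; lia.
Qed.
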